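(* Let $D$ be a distribution over $\mathcal{X}\times\mathcal{Y}$ ($\mathcal{X}\subset\mathbb{R}^d$, $\mathcal{Y}=\{1,\dots,c\}$) that is $(k_1,\dots,k_n)$-separable with $\delta$-margin, and let $f:\mathcal{Y}\to\mathbb{R}^m$ be injective, regarding $f(y)$ as the desired output for an input $x$ with label $y$. Let $K=\prod_{s=1}^n k_s$. Then for every $\epsilon>0$ there exists a 4-layer network $g:\mathcal{X}\to\mathbb{R}^m$ of the form $$p^s(x)=\sum_{l=1}^{k_s} v_{s,l}\,\rho(u_s^Tx-\beta_{s,l})\ (s=1,\dots,n),\qquad p(x)=(p^1(x),\dots,p^n(x))^T,$$ $$g(x)=W^T\big(\rho(u^Tp(x)-\gamma_1),\dots,\rho(u^Tp(x)-\gamma_K)\big)^T,$$ with $u_s\in\mathbb{R}^d$, $\beta_{s,l},v_{s,l}\in\mathbb{R}$, $u\in\mathbb{R}^n$, $\gamma_1,\dots,\gamma_K\in\mathbb{R}$, $W\in\mathbb{R}^{K\times m}$ — thus with $n(d+1)+2\sum_{s=1}^n k_s+(m+1)\prod_{s=1}^n k_s$ parameters — such that $$\mathbb{P}_{(x,y)\sim D}\Big(\max_{1\le j\le m}|g_j(x)-f_j(y)|>\epsilon\Big)=0,$$ where $g_j,f_j$ denote $j$-th components.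
   Context: $\rho(t)=1/(1+e^{-t})$ is the sigmoid function. Definition ($(k_1,\dots,k_n)$-separable with $\delta$-margin): Let $\mathcal{X}\subset\mathbb{R}^d$, $\mathcal{Y}=\{1,\dots,c\}$. A distribution $D$ over $\mathcal{X}\times\mathcal{Y}$ is $(k_1,\dots,k_n)$-separable with $\delta$-margin ($\delta>0$) if there exist $a_1,\dots,a_n\in\mathbb{R}^d$ with $\|a_s\|_2=1$ and constants $b_{s,1}<b_{s,2}<\cdots<b_{s,k_s+1}$ for each $s\in\{1,\dots,n\}$ such that, for each multi-index $\mathbf{i}=(i_1,\dots,i_n)$ with $i_s\in\{1,\dots,k_s\}$ and $\mathcal{X}_{\mathbf{i}}=\{x\in\mathcal{X}: b_{s,i_s}+\delta<a_s^Tx<b_{s,i_s+1}-\delta \text{ for all } 1\le s\le n\}$: (i) there is $y_{\mathbf{i}}\in\mathcal{Y}$ with $\mathbb{P}_{(x,y)\sim D}(y=y_{\mathbf{i}}\mid x\in\mathcal{X}_{\mathbf{i}})=1$; (ii) $\mathbb{P}_{(x,y)\sim D}\big(x\in\bigcup_{\mathbf{i}}\mathcal{X}_{\mathbf{i}}\big)=1$. *)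

(* Defs.v *)
From Stdlib Require Import Reals Lra Lia.
Open Scope R_scope.

(* Vectors in R^d are functions nat -> R, only coordinates 0..d-1 matter. *)
Definition vec := nat -> R.

Fixpoint fsum (n : nat) (f : nat -> R) : R :=
  match n with O => 0 | S k => fsum k f + f k end.

Fixpoint nprod (n : nat) (k : nat -> nat) : nat :=
  match n with O => 1%nat | S j => (nprod j k * k j)%nat end.

Definition dot (d : nat) (a b : vec) : R := fsum d (fun i => a i * b i).
Definition norm2 (d : nat) (a : vec) : R := sqrt (dot d a a).

Definition rho (t : R) : R := 1 / (1 + exp (- t)).

Definition event := vec -> nat -> Prop.

(* A (finitely additive) probability on events of X x Y. *)
Definition is_prob (P : event -> R) : Prop :=
  (forall A, 0 <= P A) /\
  P (fun _ _ => True) = 1 /\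
  (forall A B : event, (forall x y, A x y -> B x y -> False) ->
      P (fun x y => A x y \/ B x y) = P A + P B) /\
  (forall A B : event, (forall x y, A x y <-> B x y) -> P A = P B).

(* P(A | B) = 1, conditional probability P(A and B)/P(B) (defined when P(B) > 0) *)
Definition cond_prob_one (P : event -> R) (A B : event) : Prop :=
  P B > 0 -> P (fun x y => A x y /\ B x y) / P B = 1.

(* a multi-index i = (i_0,...,i_{n-1}), 0 <= i_s < k_s  (0-based) *)
Definition multi_index (n : nat) (k : nat -> nat) (i : nat -> nat) : Prop :=
  forall s, (s < n)%nat -> (i s < k s)%nat.

(* the cell X_i; hyperplane constants b s 0 < b s 1 < ... < b s (k s) (0-based) *)
Definition cell (d n : nat) (X : vec -> Prop) (a : nat -> vec) (b : nat -> nat -> R)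
    (delta : R) (i : nat -> nat) (x : vec) : Prop :=
  X x /\ forall s, (s < n)%nat ->
    b s (i s) + delta < dot d (a s) x < b s (S (i s)) - delta.

Definition separable (d c n : nat) (X : vec -> Prop) (P : event -> R)
    (k : nat -> nat) (delta : R) : Prop :=
  delta > 0 /\ (forall s, (s < n)%nat -> (1 <= k s)%nat) /\
  exists (a : nat -> vec) (b : nat -> nat -> R),
    (forall s, (s < n)%nat -> norm2 d (a s) = 1) /\
    (forall s j, (s < n)%nat -> (j < k s)%nat -> b s j < b s (S j)) /\
    (forall i, multi_index n k i ->
       exists yi, (1 <= yi <= c)%nat /\
         cond_prob_one P (fun _ y => y = yi) (fun x _ => cell d n X a b delta i x)) /\
    P (fun x _ => exists i, multi_index n k i /\ cell d n X a b delta i x) = 1.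

Definition layer_p (d : nat) (k : nat -> nat) (us : nat -> vec)
    (beta v : nat -> nat -> R) (s : nat) (x : vec) : R :=
  fsum (k s) (fun l => v s l * rho (dot d (us s) x - beta s l)).

Definition net (d n : nat) (k : nat -> nat) (us : nat -> vec) (beta v : nat -> nat -> R)
    (u : vec) (gamma : nat -> R) (W : nat -> nat -> R) (x : vec) (j : nat) : R :=
  let K := nprod n k in
  fsum K (fun t => W t j *
     rho (fsum n (fun s => u s * layer_p d k us beta v s x) - gamma t)).

(* Main.v *)
Require Import Defs.
From Stdlib Require Import Reals Lra Lia Psatz Classical ClassicalEpsilon.
Open Scope R_scope.

Lemma fsum_ext n f g : (forall l, (l < n)%nat -> f l = g l) -> fsum n f = fsum n g.
Proof. induction n; intros H; simpl; auto. rewrite IHn by (intros; apply H; lia).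
  rewrite H by lia. reflexivity. Qed.

Lemma fsum_scal n c f : fsum n (fun l => c * f l) = c * fsum n f.
Proof. induction n; simpl. ring. rewrite IHn; ring. Qed.

Lemma fsum_minus n f g : fsum n (fun l => f l - g l) = fsum n f - fsum n g.
Proof. induction n; simpl. ring. rewrite IHn; ring. Qed.

Lemma fsum_abs_le n f h : (forall l, (l < n)%nat -> Rabs (f l) <= h l) ->
  Rabs (fsum n f) <= fsum n h.
Proof. induction n; intros H; simpl. rewrite Rabs_R0; lra.
  eapply Rle_trans. apply Rabs_triang. apply Rplus_le_compat.
  apply IHn; intros; apply H; lia. apply H; lia. Qed.

Lemma fsum_nonneg n f : (forall l, (l < n)%nat -> 0 <= f l) -> 0 <= fsum n f.
Proof. induction n; intros H; simpl. lra.
  assert (0 <= fsum n f) by (apply IHn; intros; apply H; lia).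
  assert (0 <= f n) by (apply H; lia). lra. Qed.

Lemma fsum_const n c : fsum n (fun _ => c) = INR n * c.
Proof. induction n; simpl fsum. simpl; ring. rewrite IHn, S_INR; ring. Qed.

Lemma fsum_tail N0 N f : (N0 <= N)%nat -> (forall l, (N0 <= l < N)%nat -> f l = 0) ->
  fsum N f = fsum N0 f.
Proof. induction N; intros Hle H. replace N0 with 0%nat by lia. reflexivity.
  destruct (Nat.eq_dec N0 (S N)) as [->|Hne]. reflexivity.
  simpl. rewrite H by lia. rewrite IHN by first [lia | intros; apply H; lia]. ring. Qed.

Lemma fsum_ind k j : (j < k)%nat ->
  fsum k (fun l => if (l <=? j)%nat then 1 else 0) = INR (S j).
Proof. intros. rewrite (fsum_tail (S j)) by first [lia | intros l Hl;
   destruct (Nat.leb_spec l j); [lia|reflexivity]].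
  rewrite (fsum_ext _ _ (fun _ => 1)). rewrite fsum_const; ring.
  intros l Hl; destruct (Nat.leb_spec l j); [reflexivity|lia]. Qed.

Definition tele (F : nat -> vec) (t j : nat) : R :=
  match t with O => F O j | S t' => F (S t') j - F t' j end.

Lemma fsum_tele F j T : fsum (S T) (fun t => tele F t j) = F T j.
Proof. induction T. simpl. ring.
  change (fsum (S (S T)) (fun t => tele F t j)) with
    (fsum (S T) (fun t => tele F t j) + tele F (S T) j).
  rewrite IHT. simpl. ring. Qed.

Lemma sum_W_ind F j T K : (T < K)%nat ->
  fsum K (fun t => tele F t j * (if (t <=? T)%nat then 1 else 0)) = F T j.
Proof. intros. rewrite (fsum_tail (S T)) by first [lia | intros l Hl;
   destruct (Nat.leb_spec l T); [lia|ring]].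
  rewrite (fsum_ext _ _ (fun t => tele F t j)). apply fsum_tele.
  intros l Hl; destruct (Nat.leb_spec l T); [ring|lia]. Qed.

Lemma bound_exists (g : nat -> R) m : exists B, 0 <= B /\ forall j, (j < m)%nat -> g j <= B.
Proof. induction m. exists 0; split; [lra|intros; lia].
  destruct IHm as [B [HB H]]. exists (Rmax B (g m)). split.
  eapply Rle_trans; [exact HB|apply Rmax_l].
  intros j Hj. destruct (Nat.eq_dec j m) as [->|]. apply Rmax_r.
  eapply Rle_trans; [apply H; lia|apply Rmax_l]. Qed.

Lemma rho_eq t : rho t * (1 + exp (- t)) = 1 /\ 0 < rho t.
Proof. pose proof (exp_pos (-t)). unfold rho. split. field. lra.
  apply Rdiv_lt_0_compat; lra. Qed.

Lemma rho_lo eta t : 0 < eta -> t <= - (1 / eta) -> Rabs (rho t) <= eta.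
Proof. intros He Ht. assert (Hi : 0 < 1 / eta) by (apply Rdiv_lt_0_compat; lra).
  assert (Hk : eta * (1/eta) = 1) by (field; lra).
  pose proof (exp_ineq1 (-t) ltac:(lra)). destruct (rho_eq t) as [H1 H2].
  set (e := exp (-t)) in *. set (r := rho t) in *.
  rewrite Rabs_pos_eq by lra.
  assert (eta * e > eta + 1) by nra.
  destruct (Rle_lt_dec r eta); auto. nra. Qed.

Lemma rho_hi eta t : 0 < eta -> t >= 1 / eta -> Rabs (rho t - 1) <= eta.
Proof. intros He Ht. assert (Hi : 0 < 1 / eta) by (apply Rdiv_lt_0_compat; lra).
  assert (Hk : eta * (1/eta) = 1) by (field; lra).
  pose proof (exp_ineq1 t ltac:(lra)). destruct (rho_eq t) as [H1 H2].
  assert (HeE : exp (-t) * exp t = 1) by (rewrite <- exp_plus; replace (-t+t) with 0 by ring; apply exp_0).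
  pose proof (exp_pos t). pose proof (exp_pos (-t)).
  set (e := exp (-t)) in *. set (E := exp t) in *. set (r := rho t) in *.
  assert (eta * E > 1) by nra.
  assert (e <= eta) by nra.
  assert (r <= 1) by nra.
  rewrite Rabs_left1 by lra. nra. Qed.

Fixpoint encN (n : nat) (k i : nat -> nat) : nat :=
  match n with O => O | S j => (encN j k i + i j * nprod j k)%nat end.

Lemma encN_lt n k i : multi_index n k i -> (encN n k i < nprod n k)%nat.
Proof. unfold multi_index. induction n; intros H; simpl. lia.
  assert (encN n k i < nprod n k)%nat by (apply IHn; intros; apply H; lia).
  assert (i n < k n)%nat by (apply H; lia). nia. Qed.

Lemma encN_inj n k i i' : multi_index n k i -> multi_index n k i' ->
  encN n k i = encN n k i' -> forall s, (s < n)%nat -> i s = i' s.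
Proof. unfold multi_index. induction n; intros H H' E s Hs. lia.
  simpl in E.
  assert (e1 : (encN n k i < nprod n k)%nat) by (apply encN_lt; intros t Ht; apply H; lia).
  assert (e2 : (encN n k i' < nprod n k)%nat) by (apply encN_lt; intros t Ht; apply H'; lia).
  assert (Ha : i n = i' n).
  { destruct (Nat.lt_total (i n) (i' n)) as [Hl|[Hl|Hl]]; auto.
    - assert ((i n + 1) * nprod n k <= i' n * nprod n k)%nat by (apply Nat.mul_le_mono_r; lia). nia.
    - assert ((i' n + 1) * nprod n k <= i n * nprod n k)%nat by (apply Nat.mul_le_mono_r; lia). nia. }
  destruct (Nat.eq_dec s n) as [->|Hne]; auto.
  apply IHn; try (intros; first [apply H | apply H']; lia).
  rewrite Ha in E. lia. lia. Qed.

Lemma enc_real n k i : fsum n (fun s => INR (nprod s k) * INR (S (i s))) =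
   INR (encN n k i) + fsum n (fun s => INR (nprod s k)).
Proof. induction n; cbn [fsum encN]. simpl; ring. rewrite IHn.
  rewrite plus_INR, mult_INR, S_INR. ring. Qed.

Lemma cell_ext d n X a b delta i i' x : (forall s, (s < n)%nat -> i s = i' s) ->
  cell d n X a b delta i x -> cell d n X a b delta i' x.
Proof. unfold cell; intros E [HX H]; split; auto. intros s Hs. rewrite <- (E s Hs). auto. Qed.

Lemma b_mono (b : nat -> R) K : (forall j, (j < K)%nat -> b j < b (S j)) ->
  forall l l', (l <= l')%nat -> (l' <= K)%nat -> b l <= b l'.
Proof. intros H l l' H1. induction H1; intros H2. lra.
  pose proof (H m ltac:(lia)). pose proof (IHle ltac:(lia)). lra. Qed.

Section Prob.
Variable P : event -> R.
Hypothesis HP : is_prob P.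

Lemma P_ext A B : (forall x y, A x y <-> B x y) -> P A = P B.
Proof. destruct HP as [_ [_ [_ H]]]. apply H. Qed.
Lemma P_add A B : (forall x y, A x y -> B x y -> False) ->
      P (fun x y => A x y \/ B x y) = P A + P B.
Proof. destruct HP as [_ [_ [H _]]]. apply H. Qed.
Lemma P_ge0 A : 0 <= P A.
Proof. destruct HP as [H _]. apply H. Qed.

Lemma P_empty : P (fun _ _ => False) = 0.
Proof. pose proof (P_add (fun _ _ => False) (fun _ _ => False) ltac:(intros x y Hq; destruct Hq)).
  rewrite (P_ext _ (fun _ _ => False)) in H by tauto. lra. Qed.

Lemma P_mono A B : (forall x y, A x y -> B x y) -> P A <= P B.
Proof. intros H. rewrite (P_ext B (fun x y => A x y \/ (B x y /\ ~ A x y))).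
  rewrite P_add by tauto. pose proof (P_ge0 (fun x y => B x y /\ ~ A x y)). lra.
  intros x y; destruct (classic (A x y)); firstorder. Qed.

Lemma P_union A B : P (fun x y => A x y \/ B x y) <= P A + P B.
Proof. rewrite (P_ext _ (fun x y => A x y \/ (B x y /\ ~ A x y))).
  rewrite P_add by tauto. pose proof (P_mono (fun x y => B x y /\ ~ A x y) B ltac:(intros x y [Hq _]; exact Hq)). lra.
  intros x y; destruct (classic (A x y)); tauto. Qed.

Lemma P_funion N (A : nat -> event) :
  P (fun x y => exists t, (t < N)%nat /\ A t x y) <= fsum N (fun t => P (A t)).
Proof. induction N; simpl.
  rewrite (P_ext _ (fun _ _ => False)). rewrite P_empty; lra.
  intros x y; split; [intros [t [Ht _]]; lia | tauto].
  rewrite (P_ext _ (fun x y => (exists t, (t < N)%nat /\ A t x y) \/ A N x y)).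
  eapply Rle_trans. apply P_union. lra.
  intros x y; split. intros [t [Ht HA]]. destruct (Nat.eq_dec t N) as [->|]. right; auto.
  left; exists t; split; auto; lia.
  intros [[t [Ht HA]]|HA]. exists t; split; auto; lia. exists N; split; auto. Qed.

Lemma P_compl A : P A = 1 -> P (fun x y => ~ A x y) = 0.
Proof. intros H. destruct HP as [_ [H1 _]].
  rewrite (P_ext _ (fun x y => A x y \/ ~ A x y)) in H1.
  rewrite P_add in H1 by tauto. lra. intros x y; split; try tauto; intros _; apply classic. Qed.

Lemma P_zero_cell (C : event) (Y : nat) : cond_prob_one P (fun _ y => y = Y) C ->
  P (fun x y => C x y /\ y <> Y) = 0.
Proof. unfold cond_prob_one. intros Hc. pose proof (P_ge0 (fun x y => C x y /\ y <> Y)).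
  destruct (Rle_lt_dec (P C) 0).
  pose proof (P_mono (fun x y => C x y /\ y <> Y) C ltac:(intros x y [Hq _]; exact Hq)). lra.
  specialize (Hc r).
  assert (E1 : P (fun x y => y = Y /\ C x y) = P C).
  { set (a := P (fun x y => y = Y /\ C x y)) in *.
    assert (a = a / P C * P C) by (field; lra). rewrite Hc in H0. lra. }
  rewrite (P_ext C (fun x y => (y = Y /\ C x y) \/ (C x y /\ y <> Y))) in E1.
  rewrite P_add in E1 by tauto. lra.
  intros x y; destruct (Nat.eq_dec y Y); tauto. Qed.
End Prob.

Lemma dot_scal d C a x : dot d (fun i => C * a i) x = C * dot d a x.
Proof. unfold dot. rewrite <- fsum_scal. apply fsum_ext; intros; ring. Qed.

Lemma layer_approx d n (X : vec -> Prop) k a b delta C1 eta1 i x s :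
  0 < eta1 -> 0 < C1 -> C1 * delta >= 1 / eta1 ->
  (forall s j, (s < n)%nat -> (j < k s)%nat -> b s j < b s (S j)) ->
  multi_index n k i -> cell d n X a b delta i x -> (s < n)%nat ->
  Rabs (layer_p d k (fun s i => C1 * a s i) (fun s l => C1 * b s l) (fun _ _ => 1) s x
        - INR (S (i s))) <= INR (k s) * eta1.
Proof. intros He HC HCd Hb Hm [_ Hc] Hs. unfold layer_p.
  pose proof (Hm s Hs) as His. specialize (Hc s Hs).
  rewrite <- (fsum_ind (k s) (i s)) by auto. rewrite <- fsum_minus.
  replace (INR (k s) * eta1) with (fsum (k s) (fun _ => eta1)) by (rewrite fsum_const; ring).
  apply fsum_abs_le. intros l Hl. rewrite dot_scal.
  set (D := dot d (a s) x) in *.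
  destruct (Nat.leb_spec l (i s)).
  - assert (b s l <= b s (i s)) by (apply (b_mono (b s) (k s)); auto; lia).
    replace (1 * rho (C1 * D - C1 * b s l) - 1) with (rho (C1 * D - C1 * b s l) - 1) by ring.
    apply rho_hi; auto. nra.
  - assert (b s (S (i s)) <= b s l) by (apply (b_mono (b s) (k s)); auto; lia).
    replace (1 * rho (C1 * D - C1 * b s l) - 0) with (rho (C1 * D - C1 * b s l)) by ring.
    apply rho_lo; auto. nra.
Qed.

Lemma net_approx d n m (X : vec -> Prop) k a b delta (F : nat -> vec) B eps
    C1 eta1 C2 eta2 i x j :
  0 < eta1 -> 0 < C1 -> C1 * delta >= 1 / eta1 ->
  eta1 * fsum n (fun s => INR (nprod s k) * INR (k s)) <= 1/4 ->
  0 < eta2 -> 0 < C2 -> C2 / 4 >= 1 / eta2 -> 0 <= B -> B * eta2 < eps ->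
  (forall s j, (s < n)%nat -> (j < k s)%nat -> b s j < b s (S j)) ->
  (forall j, (j < m)%nat -> fsum (nprod n k) (fun t => Rabs (tele F t j)) <= B) ->
  multi_index n k i -> cell d n X a b delta i x -> (j < m)%nat ->
  Rabs (net d n k (fun s i => C1 * a s i) (fun s l => C1 * b s l) (fun _ _ => 1)
          (fun s => C2 * INR (nprod s k))
          (fun t => C2 * (fsum n (fun s => INR (nprod s k)) + INR t - 1/2))
          (tele F) x j - F (encN n k i) j) < eps.
Proof. intros He1 HC1 HCd HQ He2 HC2 HC2e HB0 HBe Hb HB Hm Hc Hj.
  set (E := fsum n (fun s => INR (nprod s k))).
  set (p := fun s => layer_p d k (fun s i => C1 * a s i) (fun s l => C1 * b s l) (fun _ _ => 1) s x).
  set (z := fsum n (fun s => C2 * INR (nprod s k) * p s)).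
  set (T := encN n k i).
  assert (Hz : Rabs (z - C2 * (INR T + E)) <= C2 / 4).
  { unfold T, E. rewrite <- enc_real, <- fsum_scal. unfold z. rewrite <- fsum_minus.
    eapply Rle_trans. apply fsum_abs_le with
      (h := fun s => C2 * (INR (nprod s k) * INR (k s)) * eta1).
    intros s Hs.
    replace (C2 * INR (nprod s k) * p s - C2 * (INR (nprod s k) * INR (S (i s))))
      with ((C2 * INR (nprod s k)) * (p s - INR (S (i s)))) by ring.
    rewrite Rabs_mult. rewrite (Rabs_pos_eq (C2 * INR (nprod s k)))
      by (apply Rmult_le_pos; [lra|apply pos_INR]).
    pose proof (layer_approx d n X k a b delta C1 eta1 i x s He1 HC1 HCd Hb Hm Hc Hs).
    fold (p s) in H. pose proof (pos_INR (nprod s k)).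
    replace (C2 * (INR (nprod s k) * INR (k s)) * eta1) with
      ((C2 * INR (nprod s k)) * (INR (k s) * eta1)) by ring.
    apply Rmult_le_compat_l; auto. apply Rmult_le_pos; lra.
    rewrite (fsum_ext _ _ (fun s => (C2 * eta1) * (INR (nprod s k) * INR (k s))))
      by (intros; ring).
    rewrite fsum_scal. nra. }
  unfold net. cbv zeta.
  change (fsum n (fun s => C2 * INR (nprod s k) * layer_p d k (fun s i => C1 * a s i) (fun s l => C1 * b s l) (fun _ _ => 1) s x)) with z.
  rewrite <- (sum_W_ind F j T (nprod n k)) by (apply encN_lt; auto).
  rewrite <- fsum_minus.
  eapply Rle_lt_trans. apply fsum_abs_le with (h := fun t => Rabs (tele F t j) * eta2).
  - intros t Ht.
    replace (tele F t j * rho (z - C2 * (E + INR t - 1 / 2)) -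
      tele F t j * (if (t <=? T)%nat then 1 else 0)) with
      (tele F t j * (rho (z - C2 * (E + INR t - 1 / 2)) - (if (t <=? T)%nat then 1 else 0)))
      by ring.
    rewrite Rabs_mult. apply Rmult_le_compat_l. apply Rabs_pos.
    destruct (Nat.leb_spec t T).
    + apply rho_hi; auto. apply le_INR in H.
      assert (C2 * (INR T - INR t) >= 0) by nra.
      pose proof (Rle_abs (z - C2 * (INR T + E))) as Ha1; pose proof (Rabs_Ropp (z - C2 * (INR T + E))) as Ha2; pose proof (Rle_abs (-(z - C2 * (INR T + E)))) as Ha3. lra.
    + rewrite Rminus_0_r. apply rho_lo; auto. apply le_INR in H. rewrite S_INR in H.
      assert (C2 * (INR t - INR T - 1) >= 0) by nra.
      pose proof (Rle_abs (z - C2 * (INR T + E))) as Ha1; pose proof (Rabs_Ropp (z - C2 * (INR T + E))) as Ha2; pose proof (Rle_abs (-(z - C2 * (INR T + E)))) as Ha3. lra.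
  - rewrite (fsum_ext _ _ (fun t => eta2 * Rabs (tele F t j))) by (intros; ring).
    rewrite fsum_scal. specialize (HB j Hj). nra.
Qed.

Theorem theorem2
  (d c m n : nat) (X : vec -> Prop) (P : event -> R)
  (k : nat -> nat) (delta : R) (f : nat -> vec) :
  is_prob P ->
  P (fun x y => ~ (X x /\ (1 <= y <= c)%nat)) = 0 ->
  separable d c n X P k delta ->
  (forall y1 y2, (1 <= y1 <= c)%nat -> (1 <= y2 <= c)%nat ->
     (forall j, (j < m)%nat -> f y1 j = f y2 j) -> y1 = y2) ->
  forall eps, eps > 0 ->
  exists (us : nat -> vec) (beta v : nat -> nat -> R) (u : vec)
         (gamma : nat -> R) (W : nat -> nat -> R),
    P (fun x y => exists j, (j < m)%nat /\
         Rabs (net d n k us beta v u gamma W x j - f y j) > eps) = 0.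
Proof.
  intros Hprob _ Hsep _ eps Heps.
  destruct Hsep as [Hdelta [Hk1 [a [b [Hnorm [Hb [Hcells Hcover]]]]]]].
  assert (HY : forall i, {yi : nat | multi_index n k i ->
     cond_prob_one P (fun _ y => y = yi) (fun x _ => cell d n X a b delta i x)}).
  { intro i. apply constructive_indefinite_description.
    destruct (classic (multi_index n k i)) as [Hm|Hm].
    - destruct (Hcells i Hm) as [yi [_ Hyi]]. exists yi; auto.
    - exists 0%nat; intro; contradiction. }
  set (Y := fun i => proj1_sig (HY i)).
  assert (HYs : forall i, multi_index n k i ->
     cond_prob_one P (fun _ y => y = Y i) (fun x _ => cell d n X a b delta i x))
    by (intros i Hi; exact (proj2_sig (HY i) Hi)).
  assert (Hdec : forall t, {i : nat -> nat | (exists i', multi_index n k i' /\ encN n k i' = t) ->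
      multi_index n k i /\ encN n k i = t}).
  { intro t. apply constructive_indefinite_description.
    destruct (classic (exists i', multi_index n k i' /\ encN n k i' = t)) as [[i' Hi']|Hno].
    - exists i'; auto.
    - exists (fun _ => 0%nat); intro; contradiction. }
  set (dec := fun t => proj1_sig (Hdec t)).
  set (F := fun t => f (Y (dec t))).
  destruct (bound_exists (fun j => fsum (nprod n k) (fun t => Rabs (tele F t j))) m)
    as [B [HB0 HB]].
  set (Q := fsum n (fun s => INR (nprod s k) * INR (k s))).
  assert (HQ : 0 <= Q).
  { apply fsum_nonneg; intros; apply Rmult_le_pos; apply pos_INR. }
  set (eta1 := 1 / (4 * (Q + 1))).
  set (C1 := 1 / (eta1 * delta)).
  set (eta2 := eps / (B + 1)).
  set (C2 := 4 / eta2).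
  assert (He1 : 0 < eta1) by (unfold eta1; apply Rdiv_lt_0_compat; lra).
  assert (He2 : 0 < eta2) by (unfold eta2; apply Rdiv_lt_0_compat; lra).
  assert (HC1 : 0 < C1) by (unfold C1; apply Rdiv_lt_0_compat; nra).
  assert (HC2 : 0 < C2) by (unfold C2; apply Rdiv_lt_0_compat; lra).
  assert (HCd : C1 * delta >= 1 / eta1) by (unfold C1; right; field; lra).
  assert (HQ' : eta1 * Q <= 1 / 4).
  { unfold eta1. replace (1 / (4 * (Q + 1)) * Q) with (Q / (4 * (Q + 1))) by (field; lra).
    apply Rmult_le_reg_r with (4 * (Q + 1)). lra.
    replace (Q / (4 * (Q + 1)) * (4 * (Q + 1))) with Q by (field; lra). lra. }
  assert (HC2e : C2 / 4 >= 1 / eta2) by (unfold C2; right; field; lra).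
  assert (HBe : B * eta2 < eps).
  { unfold eta2. replace (B * (eps / (B + 1))) with (eps * (B / (B + 1))) by (field; lra).
    assert (B / (B + 1) < 1).
    { apply Rmult_lt_reg_r with (B + 1). lra.
      replace (B / (B + 1) * (B + 1)) with B by (field; lra). lra. }
    nra. }
  exists (fun s i => C1 * a s i), (fun s l => C1 * b s l), (fun _ _ => 1),
    (fun s => C2 * INR (nprod s k)),
    (fun t => C2 * (fsum n (fun s => INR (nprod s k)) + INR t - 1/2)), (tele F).
  set (Nc := fun (x : vec) (y : nat) => ~ (fun x _ => exists i, multi_index n k i /\
       cell d n X a b delta i x) x y).
  set (Bt := fun (t : nat) (x : vec) (y : nat) => multi_index n k (dec t) /\
       cell d n X a b delta (dec t) x /\ y <> Y (dec t)).
  assert (PNc : P Nc = 0) by (apply (P_compl P Hprob); exact Hcover).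
  assert (PBt : forall t, P (Bt t) = 0).
  { intro t. destruct (classic (multi_index n k (dec t))) as [Hm|Hm].
    - rewrite (P_ext P Hprob _ (fun x y => (fun x _ => cell d n X a b delta (dec t) x) x y
          /\ y <> Y (dec t))).
      apply P_zero_cell; auto.
      intros x y; unfold Bt; tauto.
    - apply Rle_antisym; [|apply P_ge0; auto].
      rewrite <- (P_empty P Hprob). apply P_mono; auto.
      intros x y [H _]; contradiction. }
  apply Rle_antisym; [|apply P_ge0; auto].
  eapply Rle_trans. apply (P_mono P Hprob) with
    (B := fun x y => Nc x y \/ exists t, (t < nprod n k)%nat /\ Bt t x y).
  { intros x y [j [Hj Hgt]].
    destruct (classic (exists i, multi_index n k i /\ cell d n X a b delta i x))
      as [[i [Hm Hc]]|Hn]; [right|left; exact Hn].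
    exists (encN n k i). split. apply encN_lt; exact Hm.
    destruct (proj2_sig (Hdec (encN n k i)) (ex_intro _ i (conj Hm eq_refl))) as [Hm' He].
    fold (dec (encN n k i)) in Hm', He.
    assert (Hag : forall s, (s < n)%nat -> i s = dec (encN n k i) s)
      by (apply (encN_inj n k); auto).
    unfold Bt. split; auto. split. apply (cell_ext _ _ _ _ _ _ i); auto.
    intro Hy.
    pose proof (net_approx d n m X k a b delta F B eps C1 eta1 C2 eta2 i x j
      He1 HC1 HCd HQ' He2 HC2 HC2e HB0 HBe Hb HB Hm Hc Hj).
    unfold F at 2 in H. rewrite <- Hy in H. lra. }
  eapply Rle_trans. apply P_union; auto.
  eapply Rle_trans. apply Rplus_le_compat_l. apply P_funion; auto.
  rewrite PNc. rewrite (fsum_ext _ _ (fun _ => 0)) by (intros; apply PBt).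
  rewrite fsum_const. lra.
Qed.
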